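(* Let $n,m>3$ be integers and let $\psi$ be an automorphism of $\mathcal{CSR}(m,n)$, and suppose $\psi_1,\dots,\psi_m$ are permutations of $\mathbb{Z}_n$ and $\sigma$ is a permutation of $[m]$ such that $\psi\big(\sum_i x_ie_i\big)=\sum_i\psi_i(x_i)e_{\sigma(i)}$ for every vertex. Then there exist $d_1,\dots,d_m\in\mathbb{Z}_n$ such that the functions $\psi_1+d_1,\dots,\psi_m+d_m$ on $\mathbb{Z}_n$ are all equal.
   Context: For positive integers $m,n$, the cyclic simplicial rook graph $\mathcal{CSR}(m,n)$ is the graph whose vertices are the vectors $(a_1,\dots,a_m)\in\mathbb{Z}_n^m$ with $a_1+\cdots+a_m\equiv 0 \pmod n$, two vertices being adjacent if and only if their vectors differ in exactly two coordinates. $[m]=\{1,\dots,m\}$ and $e_i\in\mathbb{Z}_n^m$ is the vector with $1$ in coordinate $i$ and $0$ elsewhere. For a function $f:\mathbb{Z}_n\to\mathbb{Z}_n$ and $d\in\mathbb{Z}_n$, $f+d$ denotes $x\mapsto f(x)+d$. *)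

(* Defs.v *)
From HB Require Import structures.
From mathcomp Require Import all_boot all_order all_algebra all_fingroup.
Set Implicit Arguments. Unset Strict Implicit. Unset Printing Implicit Defensive.
Import GRing.Theory.
Local Open Scope ring_scope.

(* Vectors of Z_n^m, indexed by 'I_m (coordinates 1..m are 0..m-1). *)
Notation vecZ m n := {ffun 'I_m -> 'Z_n}.

Definition e_ (m n : nat) (i : 'I_m) : vecZ m n := [ffun j => (j == i)%:R].
Arguments e_ : clear implicits.

Definition is_vertex (m n : nat) (x : vecZ m n) : bool := \sum_(i < m) x i == 0.

Definition CSRvert (m n : nat) := {x : vecZ m n | is_vertex x}.

Definition csr_adj (m n : nat) (x y : CSRvert m n) : bool :=
  #|[set k : 'I_m | val x k != val y k]| == 2%N.

Definition csr_aut (m n : nat) (psi : {perm CSRvert m n}) : Prop :=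
  forall x y : CSRvert m n, csr_adj (psi x) (psi y) = csr_adj x y.

Definition vscale (m n : nat) (c : 'Z_n) (v : vecZ m n) : vecZ m n :=
  [ffun j => c * v j].

(* Main.v *)
Require Import Defs.
From HB Require Import structures.
From mathcomp Require Import all_boot all_order all_algebra all_fingroup.
Import GRing.Theory.
Local Open Scope ring_scope.

Lemma sum_delta (m : nat) (R : nmodType) (c : R) (s : 'I_m) (F : 'I_m -> R) :
  (forall k, k != s -> F k = 0) -> \sum_k F k = F s.
Proof.
move=> H; rewrite (bigD1 s) //= big1 ?addr0 // => k /H //.
Qed.

Lemma image_sum (m n : nat) (psi : {perm CSRvert m n})
  (psis : 'I_m -> {perm 'Z_n}) (sigma : {perm 'I_m})
  (hform : forall x : CSRvert m n,
     val (psi x) = \sum_(i < m) vscale (psis i (val x i)) (e_ m n (sigma i)))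
  (x : CSRvert m n) : \sum_i psis i (val x i) = 0.
Proof.
transitivity (\sum_k (val (psi x)) k); last by apply/eqP; exact: (valP (psi x)).
rewrite hform.
under [RHS]eq_bigr do rewrite sum_ffunE.
rewrite exchange_big /=; apply: eq_bigr => i _.
rewrite (@sum_delta _ _ 0 (sigma i)) ?ffunE ?eqxx ?mulr1 //.
by move=> k /negbTE; rewrite !ffunE => ->; rewrite mulr0.
Qed.

Arguments image_sum {m n psi psis sigma}.

Lemma key (m n : nat) (psi : {perm CSRvert m n})
  (psis : 'I_m -> {perm 'Z_n}) (sigma : {perm 'I_m})
  (hform : forall x : CSRvert m n,
     val (psi x) = \sum_(i < m) vscale (psis i (val x i)) (e_ m n (sigma i)))
  (i j : 'I_m) (ij : i != j) (a : 'Z_n) :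
  (psis i a - psis i 0) + (psis j (-a) - psis j 0) = 0.
Proof.
have ji : j != i by rewrite eq_sym.
pose v : vecZ m n := [ffun k => if k == i then a else if k == j then -a else 0].
have vv : is_vertex v.
  rewrite /is_vertex (bigD1 i) //= (bigD1 j) ?ji //= big1.
    by rewrite !ffunE eqxx (negbTE ji) eqxx addr0 subrr.
  by move=> k /andP[ki kj]; rewrite ffunE (negbTE ki) (negbTE kj).
pose z : vecZ m n := [ffun k => 0].
have zv : is_vertex z by rewrite /is_vertex big1 // => k _; rewrite ffunE.
have h1 := image_sum hform (exist _ v vv).
have h2 := image_sum hform (exist _ z zv).
have : \sum_k (psis k (v k) - psis k (z k)) = 0 by rewrite sumrB /= h1 h2 subrr.
rewrite (bigD1 i) //= (bigD1 j) ?ji //= big1.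
  by rewrite !ffunE eqxx (negbTE ji) eqxx addr0.
by move=> k /andP[ki kj]; rewrite !ffunE (negbTE ki) (negbTE kj) subrr.
Qed.

Arguments key {m n psi psis sigma}.

Theorem lemma7 (m n : nat) (hm : (3 < m)%N) (hn : (3 < n)%N)
  (psi : {perm CSRvert m n}) (hpsi : csr_aut psi)
  (psis : 'I_m -> {perm 'Z_n}) (sigma : {perm 'I_m})
  (hform : forall x : CSRvert m n,
     val (psi x) = \sum_(i < m) vscale (psis i (val x i)) (e_ m n (sigma i))) :
  exists d : 'I_m -> 'Z_n,
    forall (i j : 'I_m) (a : 'Z_n), psis i a + d i = psis j a + d j.
Proof.
exists (fun i => - psis i 0) => i j a.
case: (eqVneq i j) => [-> //|ij].
have [l /andP[li lj]] : exists l, (l != i) && (l != j).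
  case: (boolP [exists l, (l != i) && (l != j)]) => [/existsP //|/existsPn H]; exfalso.
  have : [set: 'I_m] \subset [set i; j].
    apply/subsetP => l _; have := H l; rewrite negb_and !negbK !inE.
    by case/orP => ->; rewrite ?orbT.
  move/subset_leq_card; rewrite cardsT card_ord => le.
  move: le; rewrite cards2 ij => le; have := leq_trans hm le; by [].
rewrite eq_sym in li; rewrite eq_sym in lj.
have h1' := key hform _ _ li a. have h2' := key hform _ _ lj a.
by apply: (addIr (psis l (-a) - psis l 0)); rewrite h1' h2'.
Qed.
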